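(* Let $F$ be a field of characteristic not $2$ and $V=U^\vee\oplus V_0\oplus U$ a non-degenerate quadratic space with $U,U^\vee$ isotropic, in duality, $V_0=(U^\vee\oplus U)^\perp$, and assume $V_0$ is anisotropic. Let $W=V\oplus V_0^-$, $X=\Delta(V_0)\oplus U$ with $\Delta(V_0)=\{((0,v,0),v):v\in V_0\}$, $P_X\subseteq\mathrm{SO}(W)$ the stabilizer of $X$, and $H=\mathrm{SO}(V)\times\mathrm{SO}(V_0^-)\subseteq\mathrm{SO}(W)$. Then $P_X(F)\backslash\mathrm{SO}(W)(F)/H(F)$ is a single point, i.e. $\mathrm{SO}(W)(F)=P_X(F)H(F)$.
   Context: $V_0^-$ denotes $V_0$ with the negated quadratic form; $W=V\oplus V_0^-$ is an orthogonal direct sum, and $X$ is a maximal isotropic subspace of $W$. $\mathrm{SO}$ groups act on the right. *)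

(* Defs.v *)
(* Quadratic spaces in coordinates: vectors are row vectors,
   a quadratic space is F^n ('rV_n) with a symmetric Gram matrix B,
   b(v,w) = v *m B *m w^T, Q(v) = b(v,v).  Subspaces are row spaces (%MS).
   Groups act on the right: v |-> v *m g. *)
From HB Require Import structures.
From mathcomp Require Import all_boot all_order all_algebra.
Set Implicit Arguments. Unset Strict Implicit. Unset Printing Implicit Defensive.
Import GRing.Theory.
Local Open Scope ring_scope.

Definition isometry_mx (F : fieldType) n (B g : 'M[F]_n) : bool :=
  g *m B *m g^T == B.

Definition SO_mx (F : fieldType) n (B g : 'M[F]_n) : bool :=
  isometry_mx B g && (\det g == 1).

Definition orth_mx (F : fieldType) n k (B : 'M[F]_n) (A : 'M[F]_(k, n)) :=
  kermx (B *m A^T).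

Definition anisotropic_mx (F : fieldType) n m (B : 'M[F]_n) (E : 'M[F]_(m, n)) :=
  forall x : 'rV[F]_m, x != 0 -> (x *m E) *m B *m (x *m E)^T != 0.

(* Gram matrix of V_0^- in the basis E0 of V_0 *)
Definition neg_gram (F : fieldType) n m (B : 'M[F]_n) (E0 : 'M[F]_(m, n)) : 'M[F]_m :=
  - (E0 *m B *m E0^T).

Definition W_gram (F : fieldType) n m (B : 'M[F]_n) (E0 : 'M[F]_(m, n)) : 'M[F]_(n + m) :=
  block_mx B 0 0 (neg_gram B E0).

(* X = Delta(V_0) (+) U : rows ((x E0, x)) and ((u, 0)) *)
Definition X_mx (F : fieldType) n m r (E0 : 'M[F]_(m, n)) (U : 'M[F]_(r, n))
  : 'M[F]_(m + r, n + m) :=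
  col_mx (row_mx E0 1%:M) (row_mx U 0).

Definition PX_mx (F : fieldType) n m r (B : 'M[F]_n) (E0 : 'M[F]_(m, n))
  (U : 'M[F]_(r, n)) (g : 'M[F]_(n + m)) : bool :=
  SO_mx (W_gram B E0) g && (X_mx E0 U *m g == X_mx E0 U)%MS.

Definition H_mx (F : fieldType) n m (B : 'M[F]_n) (E0 : 'M[F]_(m, n))
  (g : 'M[F]_(n + m)) : Prop :=
  exists (h1 : 'M[F]_n) (h2 : 'M[F]_m),
    [/\ SO_mx B h1, SO_mx (neg_gram B E0) h2 & g = block_mx h1 0 0 h2].

(* Main.v *)
Require Import Defs.
From HB Require Import structures.
From mathcomp Require Import all_boot all_order all_algebra zify.
Set Implicit Arguments. Unset Strict Implicit. Unset Printing Implicit Defensive.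
Import GRing.Theory.
Local Open Scope ring_scope.

Section Aux.
Variable F : fieldType.

Lemma exists_basis p q k (A : 'M[F]_(p,q)) : \rank A = k ->
  exists Z : 'M[F]_(k,q), (Z :=: A)%MS /\ row_free Z.
Proof. move=> <-; exists (row_base A); split; [exact: eq_row_base | exact: row_base_free]. Qed.

Lemma trB n p q (B : 'M[F]_n) (a : 'M[F]_(p,n)) (b : 'M[F]_(q,n)) :
  B^T = B -> (a *m B *m b^T)^T = b *m B *m a^T.
Proof. by move=> hB; rewrite !trmx_mul trmxK hB mulmxA. Qed.

Lemma unit_iso n (B g : 'M[F]_n) : B \in unitmx -> g *m B *m g^T = B -> g \in unitmx.
Proof.
move=> Bu h; rewrite unitmxE unitfE; apply/eqP => d0.
by move: Bu; rewrite unitmxE -h !det_mulmx d0 !mul0r unitr0.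
Qed.

Lemma stab_det k N (Wg q : 'M[F]_N) (X : 'M[F]_(k, N)) :
  N = (k + k)%N -> Wg \in unitmx -> Wg^T = Wg -> X *m Wg *m X^T = 0 -> row_free X ->
  q *m Wg *m q^T = Wg -> (X *m q <= X)%MS -> \det q = 1.
Proof.
move=> eN; subst N => Wu Ws iso frX qiso sub.
have : ((1%:M : 'M[F]_k) <= (X *m Wg)^T)%MS.
  apply: submx_full; rewrite /row_full mxrank_tr mxrankMfree ?row_free_unit //.
case/submxP => L hL.
have J : X *m Wg *m L^T = 1%:M.
  by rewrite -[X *m Wg]trmxK -trmx_mul -hL trmx1.
have J' : L *m Wg *m X^T = 1%:M by rewrite -trB // J trmx1.
set Q := col_mx X L.
have Qu : Q \in unitmx.
  rewrite -row_free_unit -kermx_eq0; apply/eqP.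
  set Kk := kermx Q.
  have hK : Kk *m Q = 0 by apply/sub_kermxP.
  rewrite -[Kk]hsubmxK in hK *.
  rewrite /Q mul_row_col in hK.
  have hb : rsubmx Kk = 0.
    have := congr1 (fun M => M *m (Wg *m X^T)) hK.
    by rewrite mul0mx mulmxDl !mulmxA -!(mulmxA (lsubmx Kk)) -!(mulmxA (rsubmx Kk)) iso J' mulmx0 add0r mulmx1.
  rewrite hb mul0mx addr0 in hK.
  have ha : lsubmx Kk = 0.
    apply: (row_free_inj frX); by rewrite hK mul0mx.
  by rewrite ha hb row_mx0.
set Mq := Q *m q *m invmx Q.
have hQq : Q *m q = Mq *m Q by rewrite /Mq mulmxKV.
case/submxP: sub => D hD.
have hur : ursubmx Mq = 0.
  have := congr1 usubmx hQq.
  rewrite /Q -[Mq]submxK mul_block_col mul_col_mx !col_mxKu hD => e.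
  have : row_mx (ulsubmx Mq - D) (ursubmx Mq) *m Q = 0.
    by rewrite /Q mul_row_col mulmxBl addrAC -e subrr.
  move/(congr1 (fun M => M *m invmx Q)); rewrite mulmxK // mul0mx.
  by rewrite block_mxKur; move/eqP; rewrite row_mx_eq0 => /andP[_ /eqP ->].
set G := Q *m Wg *m Q^T.
have hG : Mq *m G *m Mq^T = G.
  have -> : Mq *m G *m Mq^T = Q *m q *m (invmx Q *m Q) *m Wg *m ((invmx Q *m Q)^T) *m q^T *m Q^T.
    by rewrite /Mq /G !trmx_mul !mulmxA.
  by rewrite mulVmx // trmx1 !mulmx1 -(mulmxA Q q) -(mulmxA Q) qiso.
have hG2 : G = block_mx 0 1%:M 1%:M (L *m Wg *m L^T).
  by rewrite /G /Q tr_col_mx mul_col_mx mul_col_mx !mul_mx_row iso J J' -block_mxEv.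
rewrite -[Mq]submxK hur hG2 tr_block_mx mulmx_block mulmx_block in hG.
have [_ e _ _] := eq_block_mx hG.
move: e; rewrite !mul0mx !mulmx0 !mulmx1 !addr0 mul0mx add0r => e.
have hd : \det (ulsubmx Mq) * \det (drsubmx Mq) = 1.
  by rewrite -(det_tr (drsubmx Mq)) -det_mulmx e det1.
have : \det Mq = 1 by rewrite -[Mq]submxK hur det_lblock.
rewrite /Mq !det_mulmx det_inv mulrAC mulfV ?mul1r //.
by move: Qu; rewrite unitmxE unitfE.
Qed.

Lemma quad2 n m p q (B : 'M[F]_n) (N : 'M[F]_m) (a : 'M[F]_(p,n)) (x : 'M[F]_(p,m))
  (b : 'M[F]_(q,n)) (y : 'M[F]_(q,m)) :
  row_mx a x *m block_mx B 0 0 N *m (row_mx b y)^T = a *m B *m b^T + x *m N *m y^T.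
Proof. by rewrite mul_row_block !mulmx0 addr0 add0r tr_row_mx mul_row_col. Qed.

Lemma gram2 N p q (W : 'M[F]_N) (a : 'M[F]_(p,N)) (b : 'M[F]_(q,N)) :
  col_mx a b *m W *m (col_mx a b)^T =
  block_mx (a *m W *m a^T) (a *m W *m b^T) (b *m W *m a^T) (b *m W *m b^T).
Proof. by rewrite tr_col_mx mul_col_mx mul_col_mx !mul_mx_row -block_mxEv. Qed.

Lemma gram3 n p q s (B : 'M[F]_n) (a : 'M[F]_(p,n)) (b : 'M[F]_(q,n)) (c : 'M[F]_(s,n)) :
  col_mx a (col_mx b c) *m B *m (col_mx a (col_mx b c))^T =
  col_mx (row_mx (a *m B *m a^T) (row_mx (a *m B *m b^T) (a *m B *m c^T)))
   (col_mx (row_mx (b *m B *m a^T) (row_mx (b *m B *m b^T) (b *m B *m c^T)))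
           (row_mx (c *m B *m a^T) (row_mx (c *m B *m b^T) (c *m B *m c^T)))).
Proof. by rewrite !tr_col_mx !mul_col_mx !mul_mx_row. Qed.

Lemma iso_sub N k p q (W : 'M[F]_N) (Y : 'M[F]_(k,N)) (S : 'M[F]_(p,N)) (S' : 'M[F]_(q,N)) :
  Y *m W *m Y^T = 0 -> (S <= Y)%MS -> (S' <= Y)%MS -> S *m W *m S'^T = 0.
Proof.
move=> hY /submxP[C ->] /submxP[C' ->].
by rewrite trmx_mul !mulmxA -(mulmxA C) -(mulmxA C) hY mulmx0 mul0mx.
Qed.

Lemma blk_iso n m (B h1 : 'M[F]_n) (N h2 : 'M[F]_m) :
  h1 *m B *m h1^T = B -> h2 *m N *m h2^T = N ->
  block_mx h1 0 0 h2 *m block_mx B 0 0 N *m (block_mx h1 0 0 h2)^T = block_mx B 0 0 N.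
Proof.
move=> e1 e2; rewrite tr_block_mx !mulmx_block !mulmx0 !mul0mx !addr0 !add0r !trmx0.
by rewrite !mulmx0 !mul0mx !addr0 !add0r e1 e2.
Qed.

Lemma aniso_unit n m (B : 'M[F]_n) (E0 : 'M[F]_(m,n)) :
  (forall x : 'rV[F]_m, x != 0 -> (x *m E0) *m B *m (x *m E0)^T != 0) ->
  E0 *m B *m E0^T \in unitmx.
Proof.
move=> an; rewrite -row_free_unit -kermx_eq0; apply/negPn/negP => nz.
set x := nz_row (kermx (E0 *m B *m E0^T)).
have hx : x *m (E0 *m B *m E0^T) = 0 by apply/sub_kermxP; exact: nz_row_sub.
have : x != 0 by rewrite nz_row_eq0.
rewrite !mulmxA in hx; move/an; by rewrite trmx_mul !mulmxA hx mul0mx eqxx.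
Qed.

Lemma arith1 a b : (a + (b + a) + b - (b + a) <= b + a)%N.
Proof. lia. Qed.

Lemma arith2 a b : (a + (b + a) + b = (b + a) + (b + a))%N.
Proof. lia. Qed.

End Aux.

Theorem lemma5p3 (F : fieldType) (n m r : nat)
  (B : 'M[F]_n) (Uv U : 'M[F]_(r, n)) (E0 : 'M[F]_(m, n)) :
  (2%:R : F) != 0 ->
  B^T = B ->
  B \in unitmx ->
  (* U, U^v isotropic subspaces of dimension r (given by bases) *)
  row_free U -> row_free Uv ->
  U *m B *m U^T = 0 -> Uv *m B *m Uv^T = 0 ->
  (* U^v and U in duality *)
  Uv *m B *m U^T \in unitmx ->
  (* E0 is a basis of V_0 = (U^v (+) U)^perp *)
  row_free E0 ->
  (E0 :=: orth_mx B (col_mx Uv U))%MS ->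
  (* V = U^v (+) V_0 (+) U *)
  (mxdirect (Uv + E0 + U) /\ (Uv + E0 + U :=: 1%:M)%MS) ->
  (* V_0 anisotropic *)
  anisotropic_mx B E0 ->
  forall g : 'M[F]_(n + m),
    SO_mx (W_gram B E0) g <->
    exists p h : 'M[F]_(n + m), [/\ PX_mx B E0 U p, H_mx B E0 h & g = p *m h].
Proof.
move=> two Bs Bu frU frUv UU UvUv Ku frE0 hE0 [_ hfull] aniso g; split; last first.
  case=> p [h [/andP[/andP[/eqP pI /eqP pd] _] [h1 [h2 [/andP[/eqP i1 /eqP d1] /andP[/eqP i2 /eqP d2] hh]]] ->]].
  apply/andP; split; last by rewrite det_mulmx pd hh det_ublock d1 d2 !mul1r.
  rewrite /isometry_mx trmx_mul !mulmxA -(mulmxA p h) -(mulmxA p) hh.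
  by rewrite /W_gram (blk_iso i1 i2) -/(W_gram B E0); apply/eqP; exact: pI.
set K := Uv *m B *m U^T.
set N0 := E0 *m B *m E0^T.
have N0u : N0 \in unitmx by exact: aniso_unit.
have sE0 : (E0 <= orth_mx B (col_mx Uv U))%MS by rewrite hE0.
move/sub_kermxP: sE0; rewrite tr_col_mx !mul_mx_row => /eqP; rewrite row_mx_eq0.
rewrite !mulmxA => /andP[/eqP o1 /eqP o2].
have o1' : Uv *m B *m E0^T = 0 by rewrite -trB // o1 trmx0.
have o2' : U *m B *m E0^T = 0 by rewrite -trB // o2 trmx0.
have Kt : U *m B *m Uv^T = K^T by rewrite trB.
have indep : forall p (a : 'M_(p,r)) (b : 'M_(p,m)) (c : 'M_(p,r)),
    a *m Uv + (b *m E0 + c *m U) = 0 -> [/\ a = 0, b = 0 & c = 0].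
  move=> p a b c e.
  have ea : a = 0.
    have := congr1 (fun M => M *m (B *m U^T)) e.
    rewrite mul0mx !mulmxDl !mulmxA -!(mulmxA a) -!(mulmxA b) -!(mulmxA c) o2 UU !mulmx0 !addr0.
    move=> e'; apply: (row_free_inj (_ : row_free K)); first by rewrite row_free_unit.
    by rewrite e' mul0mx.
  rewrite ea mul0mx add0r in e.
  have eb : b = 0.
    have := congr1 (fun M => M *m (B *m E0^T)) e.
    rewrite mul0mx !mulmxDl !mulmxA -!(mulmxA b) -!(mulmxA c) o2' !mulmx0 !addr0.
    move=> e'; apply: (row_free_inj (_ : row_free N0)); first by rewrite row_free_unit.
    by rewrite e' mul0mx.
  rewrite eb mul0mx add0r in e.
  split=> //; apply: (row_free_inj frU); by rewrite e mul0mx.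
set M := col_mx Uv (col_mx E0 U).
have frM : row_free M.
  rewrite -kermx_eq0; apply/eqP.
  set Kk := kermx M.
  have hK : Kk *m M = 0 by apply/sub_kermxP.
  rewrite -[Kk]hsubmxK -[rsubmx Kk]hsubmxK /M mul_row_col mul_row_col in hK *.
  by case: (indep _ _ _ _ hK) => -> -> ->; rewrite !row_mx0.
have en : n = (r + (m + r))%N.
  have h1 : \rank (Uv + E0 + U)%MS = n by rewrite hfull mxrank1.
  have h2 := leq_of_leqif (mxrank_adds_leqif (Uv + E0)%MS U).
  have h3 := leq_of_leqif (mxrank_adds_leqif Uv E0).
  have h4 := rank_leq_row Uv; have h5 := rank_leq_row E0; have h6 := rank_leq_row U.
  have h7 := rank_leq_col M; move: frM; rewrite /row_free => /eqP h8.
  lia.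
subst n.
have Mu : M \in unitmx by rewrite -row_free_unit.
case/andP=> /eqP gI /eqP gd.
set W := W_gram B E0.
set X := X_mx E0 U.
have nN : neg_gram B E0 = - N0 by [].
have Wu : W \in unitmx.
  rewrite /W /W_gram unitmxE det_ublock nN -scaleN1r detZ unitfE.
  rewrite mulf_neq0 ?mulf_neq0 ?expf_neq0 ?oppr_eq0 ?oner_eq0 //.
    by move: Bu; rewrite unitmxE unitfE.
  by move: N0u; rewrite unitmxE unitfE.
have Ws : W^T = W.
  by rewrite /W /W_gram tr_block_mx !trmx0 Bs nN linearN /= trB.
have Xiso : X *m W *m X^T = 0.
  rewrite /X /X_mx /W /W_gram gram2 !quad2 nN !trmx0 !mulmx0 !mul0mx !addr0 o2 o2' UU.
  by rewrite trmx1 mulmx1 mul1mx -/N0 subrr block_mx0.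
have Xfree : row_free X.
  rewrite -kermx_eq0; apply/eqP.
  set Kk := kermx X.
  have hK : Kk *m X = 0 by apply/sub_kermxP.
  rewrite -[Kk]hsubmxK /X /X_mx mul_row_col !mul_mx_row add_row_mx in hK *.
  move/eqP: hK; rewrite row_mx_eq0 mulmx1 mulmx0 addr0 => /andP[/eqP e /eqP ea].
  rewrite ea mul0mx add0r in e.
  have eb : rsubmx Kk = 0 by apply: (row_free_inj frU); rewrite e mul0mx.
  by rewrite ea eb row_mx0.
have gu : g \in unitmx by rewrite unitmxE gd unitr1.
set Y := X *m g.
have Yiso : Y *m W *m Y^T = 0.
  by rewrite /Y trmx_mul !mulmxA -(mulmxA X g) -(mulmxA X) gI Xiso.
have Yrk : \rank Y = (m + r)%N.
  by rewrite /Y mxrankMfree ?row_free_unit //; move/eqP: Xfree.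
set Yp := kermx (W *m Y^T).
have YYp : (Y <= Yp)%MS by rewrite sub_kermx mulmxA Yiso.
have YpY : (Yp <= Y)%MS.
  have rkWY : \rank (W *m Y^T) = (m + r)%N.
    rewrite -mxrank_tr trmx_mul trmxK mxrankMfree ?Yrk //.
    by rewrite row_free_unit Ws.
  by rewrite -(geq_leqif (mxrank_leqif_sup YYp)) /Yp mxrank_ker rkWY Yrk arith1.
set Y1 := lsubmx Y; set Y2 := rsubmx Y.
have hY : Y = row_mx Y1 Y2 by rewrite hsubmxK.
have Y2rk : \rank Y2 = m.
  apply/eqP; rewrite eqn_leq rank_leq_col /=; rewrite leqNgt; apply/negP => lt.
  set Kz := kermx (N0 *m Y2^T).
  have Kzrk : (0 < \rank Kz)%N.
    rewrite /Kz mxrank_ker.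
    have := mxrankM_maxr N0 Y2^T; rewrite mxrank_tr subn_gt0 => h; exact: leq_ltn_trans h lt.
  set y := nz_row Kz.
  have ynz : y != 0.
    rewrite nz_row_eq0; apply/eqP => e; move: Kzrk; by rewrite e mxrank0.
  have hy : y *m (N0 *m Y2^T) = 0 by apply/sub_kermxP; exact: nz_row_sub.
  set v := row_mx (0 : 'rV[F]_(r + (m + r))) y.
  have vY : (v <= Y)%MS.
    apply: submx_trans YpY; rewrite sub_kermx mulmxA hY /v /W /W_gram quad2.
    by rewrite !mul0mx add0r nN mulmxN mulNmx -mulmxA hy oppr0.
  have := iso_sub Yiso vY vY.
  rewrite /v /W /W_gram quad2 !mul0mx add0r nN mulmxN mulNmx => /eqP; rewrite oppr_eq0.
  move: (aniso y ynz); by rewrite trmx_mul !mulmxA /N0 => /negPf ->.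
have Yfree : row_free Y by rewrite /row_free Yrk.
have : ((1%:M : 'M[F]_m) <= Y2)%MS by apply: submx_full; rewrite /row_full Y2rk.
case/submxP => D hD.
set T := D *m Y1.
have TY : (row_mx T 1%:M <= Y)%MS.
  by rewrite hD /T -mul_mx_row -hY submxMl.
have : \rank (kermx Y2) = r by rewrite mxrank_ker Y2rk addKn.
case/exists_basis => Kb [hKb frKb].
have KbY2 : Kb *m Y2 = 0 by apply/sub_kermxP; rewrite hKb.
set A' := Kb *m Y1.
have AY : (row_mx A' 0 <= Y)%MS.
  by rewrite -KbY2 /A' -mul_mx_row -hY submxMl.
have frA : row_free A'.
  rewrite -kermx_eq0; apply/eqP.
  set Kk := kermx A'.
  have hK : Kk *m A' = 0 by apply/sub_kermxP.
  have : Kk *m Kb *m Y = 0 by rewrite hY mul_mx_row -mulmxA hK -mulmxA KbY2 mulmx0 row_mx0.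
  rewrite -(mul0mx _ Y) => /(row_free_inj Yfree); rewrite -(mul0mx _ Kb).
  by move/(row_free_inj frKb).
have eT : T *m B *m T^T = N0.
  have := iso_sub Yiso TY TY; rewrite /W /W_gram quad2 nN trmx1 mulmx1 mul1mx.
  by move/eqP; rewrite subr_eq0 => /eqP.
have eTA : T *m B *m A'^T = 0.
  by have := iso_sub Yiso TY AY; rewrite /W /W_gram quad2 trmx0 mulmx0 addr0.
have eAA : A' *m B *m A'^T = 0.
  by have := iso_sub Yiso AY AY; rewrite /W /W_gram quad2 trmx0 mulmx0 addr0.
have : (K <= B *m A'^T)%MS.
  apply: submx_full; rewrite /row_full -mxrank_tr trmx_mul trmxK Bs mxrankMfree ?row_free_unit //.
case/submxP => L hL.
set L1 := L *m (1%:M - B *m T^T *m invmx N0 *m T).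
have L1T : L1 *m B *m T^T = 0.
  rewrite /L1 mulmxBr mulmx1 !mulmxBl.
  have -> : L *m (B *m T^T *m invmx N0 *m T) *m B *m T^T =
            L *m B *m T^T *m invmx N0 *m (T *m B *m T^T) by rewrite !mulmxA.
  by rewrite eT mulmxKV // subrr.
have L1A : L1 *m B *m A'^T = K.
  rewrite /L1 mulmxBr mulmx1 !mulmxBl.
  have -> : L *m (B *m T^T *m invmx N0 *m T) *m B *m A'^T =
            L *m B *m T^T *m invmx N0 *m (T *m B *m A'^T) by rewrite !mulmxA.
  by rewrite eTA mulmx0 subr0 hL mulmxA.
set S := L1 *m B *m L1^T.
have Ss : S^T = S by rewrite /S trB.
have KTu : K^T \in unitmx by rewrite unitmx_tr.
set C := (2%:R^-1 : F) *: (S *m invmx K^T).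
have CK : C *m K^T = 2%:R^-1 *: S by rewrite /C -scalemxAl mulmxKV.
have KC : K *m C^T = 2%:R^-1 *: S.
  rewrite /C linearZ /= trmx_mul trmx_inv trmxK Ss scalemxAr mulmxA mulmxV //.
  by rewrite mul1mx.
have hh : (2%:R^-1 + 2%:R^-1 : F) = 1 by rewrite -mulr2n -(mulr_natr (2%:R^-1)) mulVf.
set A'' := L1 - C *m A'.
have hA1 : A'' *m B *m A''^T = 0.
  rewrite /A'' linearB /= (trmx_mul C A') !mulmxBl !mulmxBr.
  have -> : C *m A' *m B *m (A'^T *m C^T) = C *m (A' *m B *m A'^T) *m C^T by rewrite !mulmxA.
  have -> : L1 *m B *m (A'^T *m C^T) = (L1 *m B *m A'^T) *m C^T by rewrite !mulmxA.
  have -> : C *m A' *m B *m L1^T = C *m (A' *m B *m L1^T) by rewrite !mulmxA.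
  rewrite eAA mulmx0 mul0mx subr0 L1A -(@trB _ _ _ _ B L1 A' Bs) L1A CK KC -/S.
  by rewrite -addrA -opprD -scalerDl hh scale1r subrr.
have hA2 : A'' *m B *m T^T = 0.
  rewrite /A'' !mulmxBl L1T.
  have -> : C *m A' *m B *m T^T = C *m (A' *m B *m T^T) by rewrite !mulmxA.
  by rewrite -(@trB _ _ _ _ B T A' Bs) eTA trmx0 mulmx0 subrr.
have hA3 : A'' *m B *m A'^T = K.
  rewrite /A'' !mulmxBl L1A.
  have -> : C *m A' *m B *m A'^T = C *m (A' *m B *m A'^T) by rewrite !mulmxA.
  by rewrite eAA mulmx0 subr0.
set M' := col_mx A'' (col_mx T A').
have gM : M' *m B *m M'^T = M *m B *m M^T.
  rewrite /M /M' !gram3 hA1 hA2 hA3 eT eTA eAA -(@trB _ _ _ _ B A'' T Bs) hA2 trmx0.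
  rewrite -(@trB _ _ _ _ B T A' Bs) eTA trmx0 -(@trB _ _ _ _ B A'' A' Bs) hA3.
  by rewrite UvUv o1' o1 o2 -/N0 Kt o2' UU.
set h1 := invmx M *m M'.
have h1iso : h1 *m B *m h1^T = B.
  have -> : h1 *m B *m h1^T = invmx M *m (M' *m B *m M'^T) *m (invmx M)^T.
    by rewrite /h1 trmx_mul !mulmxA.
  rewrite gM !mulmxA mulVmx // mul1mx -mulmxA -trmx_mul mulVmx // trmx1 mulmx1 //.
have h1u : h1 \in unitmx by exact: unit_iso Bu h1iso.
set Sel := row_mx (0 : 'M[F]_(m, r)) (row_mx (1%:M : 'M[F]_m) (0 : 'M[F]_(m, r))).
have E0S : E0 = Sel *m M by rewrite /Sel /M !mul_row_col !mul0mx mul1mx add0r addr0.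
set Sel' := row_mx (0 : 'M[F]_(r, r)) (row_mx (0 : 'M[F]_(r, m)) (1%:M : 'M[F]_r)).
have US : U = Sel' *m M by rewrite /Sel' /M !mul_row_col !mul0mx mul1mx !add0r.
have E0h1 : E0 *m h1 = T.
  by rewrite {1}E0S /h1 mulmxA mulmxK // /M' /Sel !mul_row_col !mul0mx mul1mx add0r addr0.
have Uh1 : U *m h1 = A'.
  by rewrite {1}US /h1 mulmxA mulmxK // /M' /Sel' !mul_row_col !mul0mx mul1mx !add0r.
set h := block_mx h1 0 0 (1%:M : 'M[F]_m).
have hu : h \in unitmx.
  by rewrite unitmxE /h det_ublock det1 mulr1 -unitmxE.
have hiso : h *m W *m h^T = W.
  rewrite /h /W /W_gram blk_iso //.
  by rewrite trmx1 mulmx1 mul1mx.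
have Xh : X *m h = col_mx (row_mx T 1%:M) (row_mx A' 0).
  rewrite /X /X_mx /h mul_col_mx !mul_row_block E0h1 Uh1 !mulmx0 !mul0mx !addr0.
  by rewrite mulmx1 add0r.
have XhY : (X *m h :=: Y)%MS.
  apply/eqmxP; rewrite -(eq_leqif (mxrank_leqif_eq _)); last first.
    by rewrite Xh col_mx_sub TY AY.
  rewrite mxrankMfree ?row_free_unit // Yrk; by move/eqP: Xfree => ->.
set p := g *m invmx h.
have hinv : invmx h *m W *m (invmx h)^T = W.
  rewrite -{1}hiso.
  have -> : invmx h *m (h *m W *m h^T) *m (invmx h)^T = (invmx h *m h) *m W *m (invmx h *m h)^T.
    by rewrite trmx_mul !mulmxA.
  by rewrite mulVmx // trmx1 mul1mx mulmx1.
have piso : p *m W *m p^T = W.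
  by rewrite /p trmx_mul !mulmxA -(mulmxA g) -(mulmxA g) hinv gI.
have Xp : (X *m p :=: X)%MS.
  rewrite /p mulmxA -/Y.
  apply: eqmx_trans (eqmxMr _ (eqmx_sym XhY)) _.
  by rewrite mulmxK.
have dp : \det p = 1.
  apply: (@stab_det _ (m + r)%N _ W p X (arith2 r m) Wu Ws Xiso Xfree piso).
  by rewrite Xp.
have dh1 : \det h1 = 1.
  move: dp; rewrite /p det_mulmx gd mul1r det_inv /h det_ublock det1 mulr1.
  by move/eqP; rewrite invr_eq1 => /eqP.
exists p, h; split.
- apply/andP; split; first by apply/andP; split; apply/eqP.
  by apply/eqmxP; exact: Xp.
- exists h1, 1%:M; split=> //.
    by apply/andP; split; apply/eqP.
  by rewrite /SO_mx /isometry_mx trmx1 mulmx1 mul1mx det1 !eqxx.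
- by rewrite /p mulmxKV.
Qed.
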